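(* Let $\gamma,z\in\mathbb{R}$ with $1+\gamma z>0$, and let $D(\gamma,z)=\int_0^z\frac{t}{(1+\gamma t)^2}\,dt$. If $\gamma z>0$, then \[D(\gamma,z)\le\frac{z^2}{2}\quad\text{and}\quad D(\gamma,z)\le\frac1\gamma\log(1+\gamma z)\frac{z}{1+\gamma z}\le\min\Big\{\frac{z^2}{1+\gamma z},\ \frac1{\gamma^2}\log(1+\gamma z)\Big\}.\] If $-1<\gamma z<0$, then $D(\gamma,z)\le\frac{z^2}{1+\gamma z}$. Consequently, for all $\gamma,z$ with $1+\gamma z>0$, $0\le D(\gamma,z)\le \frac{z^2}{1+\gamma z}$.
   Context: $D(\gamma,z)$ equals $\partial_\gamma\log u_\gamma(z)$, where $u_\gamma(z)=\exp(-\int_0^z(1+\gamma t)^{-1}dt)$, i.e. $(1+\gamma z)^{-1/\gamma}$ for $\gamma\ne0$ and $e^{-z}$ for $\gamma=0$. *)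

(* Defs.v *)
From Stdlib Require Import Reals.
From Coquelicot Require Import Coquelicot.
Open Scope R_scope.

(* D(g,z) = \int_0^z t / (1 + g t)^2 dt  (oriented integral, so z<0 allowed) *)
Definition Dgz (g z : R) : R :=
  RInt (fun t => t / (1 + g * t) ^ 2) 0 z.

(* Main.v *)
Require Import Defs.
From Stdlib Require Import Reals Lra.
From Coquelicot Require Import Coquelicot.
Open Scope R_scope.

Lemma ln_le y : 0 < y -> ln y <= y - 1.
Proof. intros Hy. pose proof (exp_ineq1_le (ln y)). rewrite exp_ln in H; lra. Qed.

Lemma ln_ge y : 0 < y -> 1 - / y <= ln y.
Proof. intros Hy. pose proof (ln_le (/ y) (Rinv_0_lt_compat _ Hy)).
  rewrite ln_Rinv in H; lra. Qed.

Lemma key u : 0 < u -> ln (1 + u) <= u / (1 + u) + u ^ 2 / 2.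
Proof.
  intros Hu.
  set (h := fun x => x / (1 + x) + x ^ 2 / 2 - ln (1 + x)).
  destruct (MVT_cor2 h (fun x => x * ((1+x)^2 - 1) / (1+x)^2) 0 u Hu) as [c [Hc1 Hc2]].
  { intros c Hc. apply is_derive_Reals. unfold h. auto_derive.
    - repeat split; lra.
    - field. lra. }
  assert (h 0 = 0) by (unfold h; rewrite Rplus_0_r, ln_1; field).
  assert (0 <= c * ((1 + c) ^ 2 - 1) / (1 + c) ^ 2 * (u - 0)).
  { apply Rmult_le_pos; [|lra]. apply Rmult_le_pos.
    apply Rmult_le_pos; nra. left; apply Rinv_0_lt_compat; nra. }
  unfold h in *. lra.
Qed.

Lemma between g z x : 0 < 1 + g * z -> Rmin 0 z <= x <= Rmax 0 z -> 0 < 1 + g * x.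
Proof.
  intros H [H1 H2]. unfold Rmin, Rmax in *.
  destruct (Rle_dec 0 z); destruct (Rle_dec 0 g); nra.
Qed.

Lemma Dclosed g z : g <> 0 -> 0 < 1 + g * z ->
  Dgz g z = (ln (1 + g * z) + / (1 + g * z) - 1) / g ^ 2.
Proof.
  intros Hg Hp. unfold Dgz.
  apply is_RInt_unique.
  replace ((ln (1 + g * z) + / (1 + g * z) - 1) / g ^ 2) with
    (minus ((fun t => (ln (1 + g * t) + / (1 + g * t)) / g ^ 2) z)
           ((fun t => (ln (1 + g * t) + / (1 + g * t)) / g ^ 2) 0)).
  2:{ simpl. unfold minus, plus, opp; simpl. rewrite Rmult_0_r, Rplus_0_r, ln_1. field. lra. }
  apply (is_RInt_derive (fun t => (ln (1 + g * t) + / (1 + g * t)) / g ^ 2) (fun t => t / (1 + g * t) ^ 2)).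
  - intros x Hx. pose proof (between g z x Hp Hx). auto_derive.
    + repeat split; lra.
    + field. split; lra.
  - intros x Hx. pose proof (between g z x Hp Hx). apply (ex_derive_continuous (V:=R_NormedModule)).
    auto_derive. rewrite Rmult_1_r; apply Rgt_not_eq; nra.
Qed.

Lemma D0 z : Dgz 0 z = z ^ 2 / 2.
Proof.
  unfold Dgz. apply is_RInt_unique.
  replace (z ^ 2 / 2) with (minus ((fun t => t ^ 2 / 2) z) ((fun t => t ^ 2 / 2) 0)).
  2:{ simpl. unfold minus, plus, opp; simpl. field. }
  apply (is_RInt_derive (fun t => t ^ 2 / 2) (fun t => t / (1 + 0 * t) ^ 2)).
  - intros x Hx. auto_derive. auto. field.
  - intros x Hx. apply (ex_derive_continuous (V:=R_NormedModule)). auto_derive. lra.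
Qed.

Lemma dv g a b : g <> 0 -> a <= b -> a / g ^ 2 <= b / g ^ 2.
Proof. intros Hg H. unfold Rdiv. apply Rmult_le_compat_r; [|exact H].
  left; apply Rinv_0_lt_compat. pose proof (Rsqr_pos_lt g Hg). unfold Rsqr in H0. nra. Qed.

Theorem lemmaB1 (g z : R) (Hpos : 0 < 1 + g * z) :
  (0 < g * z ->
     Dgz g z <= z ^ 2 / 2 /\
     Dgz g z <= / g * ln (1 + g * z) * (z / (1 + g * z)) /\
     / g * ln (1 + g * z) * (z / (1 + g * z))
       <= Rmin (z ^ 2 / (1 + g * z)) (/ g ^ 2 * ln (1 + g * z))) /\
  (-1 < g * z < 0 -> Dgz g z <= z ^ 2 / (1 + g * z)) /\
  (0 <= Dgz g z /\ Dgz g z <= z ^ 2 / (1 + g * z)).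
Proof.
  destruct (Req_dec g 0) as [Hg|Hg].
  { subst g. rewrite D0. rewrite Rmult_0_l, Rplus_0_r.
    split; [intros; lra|]. split; [intros; lra|].
    assert (0 <= z ^ 2) by nra. split; lra. }
  rewrite (Dclosed g z Hg Hpos).
  set (u := g * z) in *.
  assert (Ez : z ^ 2 = u ^ 2 / g ^ 2) by (unfold u; field; exact Hg).
  set (L := ln (1 + u)).
  set (w := / (1 + u)).
  assert (Hw : 0 < w) by (apply Rinv_0_lt_compat; lra).
  assert (Huw : u * w = 1 - w) by (unfold w; field; lra).
  assert (HL1 : L <= u) by (unfold L; pose proof (ln_le (1+u)); lra).
  assert (HL2 : 1 - w <= L) by (unfold L, w; apply ln_ge; lra).
  assert (E2 : u ^ 2 / (1 + u) = u - 1 + w) by (unfold w; field; lra).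
  assert (HB : (L + w - 1) / g ^ 2 <= z ^ 2 / (1 + u)).
  { rewrite Ez. replace (u ^ 2 / g ^ 2 / (1 + u)) with ((u ^ 2 / (1 + u)) / g ^ 2)
      by (field; lra). apply dv; auto. rewrite E2; lra. }
  assert (HA : 0 <= (L + w - 1) / g ^ 2).
  { replace 0 with (0 / g ^ 2) by (field; auto). apply dv; auto; lra. }
  split; [|split; [intros; exact HB| split; assumption]].
  intros Hu.
  assert (HK : L <= 1 - w + u ^ 2 / 2).
  { rewrite <- Huw. replace (u * w) with (u / (1 + u)) by reflexivity. apply key; auto. }
  assert (E3 : / g * L * (z / (1 + u)) = (L * (1 - w)) / g ^ 2).
  { rewrite <- Huw. unfold w, u. field. unfold u in Hpos. split; [lra|exact Hg]. }
  rewrite E3.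
  split; [rewrite Ez; replace (u ^ 2 / g ^ 2 / 2) with ((u ^ 2 / 2) / g ^ 2) by (field; exact Hg); apply dv; auto; lra|].
  split; [apply dv; auto; nra|].
  unfold Rmin. destruct (Rle_dec _ _).
  - rewrite Ez. replace (u ^ 2 / g ^ 2 / (1 + u)) with ((u ^ 2 / (1 + u)) / g ^ 2)
      by (field; lra). apply dv; auto. rewrite E2.
    assert (0 < 1 - w) by nra. nra.
  - replace (/ g ^ 2 * L) with (L / g ^ 2) by (field; auto). apply dv; auto. nra.
Qed.
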